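(* Let $\mathbb{F}$ be a finite field and $n\ge2$. Let $j_1,\dots,j_{n-1}\in\{1,\dots,n\}$ be pairwise different and $d_1,\dots,d_{n-1}\in\mathbb{N}_0$ be such that $j_i<i$ implies $d_i>0$. Then there exists a basic matrix $M=(m_{ij})\in\mathbb{F}[t]^{(n-1)\times n}$ with the following properties, for all $i=1,\dots,n-1$: (i) $\deg m_{ij}\le d_i$ for $j<j_i$; (ii) $\deg m_{ij}=d_i$ for $j=j_i$; (iii) $\deg m_{ij}<d_i$ for $j>j_i$; (iv) $m_{ii}(0)=1$; (v) $m_{ij}(0)=0$ for $j<i$.
   Context: A matrix $M\in\mathbb{F}[t]^{k\times n}$ is basic if $\mathrm{rank}\,M(\lambda)=k$ for all $\lambda$ in an algebraic closure of $\mathbb{F}$, equivalently its $k\times k$ minors are coprime. $\deg 0=-\infty$. *)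

(* Defs.v *)
From HB Require Import structures.
From mathcomp Require Import all_boot all_order all_algebra all_field.
Set Implicit Arguments. Unset Strict Implicit. Unset Printing Implicit Defensive.
Import GRing.Theory.
Local Open Scope ring_scope.

(* The k x k minors of a k x n polynomial matrix: determinants of the
   k x k submatrices obtained by choosing k columns (non-injective choices
   give zero determinants, which is harmless for coprimality). *)
Definition maximal_minor (F : fieldType) (k n : nat)
  (M : 'M[{poly F}]_(k, n)) (f : 'I_k -> 'I_n) : {poly F} :=
  \det (colsub f M).

Definition basic (F : fieldType) (k n : nat) (M : 'M[{poly F}]_(k, n)) : Prop :=
  forall p : {poly F},
    (forall f : 'I_k -> 'I_n, p %| maximal_minor M f) -> size p = 1%N.

(* Main.v *)
From HB Require Import structures.
From mathcomp Require Import all_boot all_order all_algebra all_field all_fingroup.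
From mathcomp Require Import zify.
Set Implicit Arguments. Unset Strict Implicit. Unset Printing Implicit Defensive.
Import GRing.Theory.
Require Import Defs.
Local Open Scope ring_scope.
Lemma det_pot (R : comNzRingType) k (A : 'M[R]_k) (rho : 'I_k -> nat) :
  (forall i l, l != i -> A i l != 0 -> (rho l < rho i)%N) ->
  \det A = \prod_i A i i.
Proof.
move=> H; rewrite /determinant (bigD1 (1%g : 'S_k)%type) //= odd_perm1 expr0 mul1r.
rewrite [X in _ + X]big1 ?addr0; last first.
  move=> s s1.
  case: (boolP [exists i, A i (s i) == 0]) => [/existsP [i /eqP Hi]|].
    by rewrite (bigD1 i) //= Hi mul0r mulr0.
  move=> /existsPn Hnz; exfalso.
  have [i Hi] : exists i, s i != i.
    apply/existsP; apply: contraR s1 => /existsPn Hall.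
    by apply/eqP/permP => x; rewrite perm1; apply/eqP; move: (Hall x); rewrite negbK.
  have Hle x : (rho (s x) <= rho x)%N.
    case: (eqVneq (s x) x) => [->//|ne]; exact/ltnW/H/Hnz.
  have : (\sum_x rho (s x) < \sum_x rho x)%N.
    rewrite (bigD1 i) //= [X in (_ < X)%N](bigD1 i) //=.
    rewrite -addSn; apply: leq_add; first exact: H (Hnz i).
    by apply: leq_sum => x _; exact: Hle.
  by rewrite [X in (_ < X)%N](reindex_inj (@perm_inj _ s)) ltnn.
by apply: eq_bigr => i _; rewrite perm1.
Qed.

Definition cm N (s : 'I_N.+1 -> 'I_N.+1) (k : 'I_N.+1) : 'I_N.+1 :=
  [arg max_(x > k | fconnect s k x) (x : nat)].

Lemma cmP N (s : 'I_N.+1 -> 'I_N.+1) k :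
  fconnect s k (cm s k) /\ forall x, fconnect s k x -> (x <= cm s k)%N.
Proof.
rewrite /cm; case: arg_maxnP => [|x Hx Hmax]; first exact: connect0.
by split.
Qed.

Lemma le_cm N (s : 'I_N.+1 -> 'I_N.+1) (k : 'I_N.+1) : (k <= cm s k)%N.
Proof. by case: (cmP s k) => _; apply; exact: connect0. Qed.

Lemma cm_conn N (s : 'I_N.+1 -> 'I_N.+1) k x :
  injective s -> fconnect s k x -> cm s x = cm s k.
Proof.
move=> si kx; have xk : fconnect s x k by rewrite fconnect_sym.
apply/val_inj/eqP; rewrite eqn_leq.
case: (cmP s x) => cx hx; case: (cmP s k) => ck hk.
by rewrite hk ?(connect_trans kx) // hx ?(connect_trans xk).
Qed.

Lemma cm_step N (s : 'I_N.+1 -> 'I_N.+1) k : injective s -> cm s (s k) = cm s k.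
Proof. by move=> si; apply: cm_conn => //; exact: fconnect1. Qed.

Lemma cm_fix N (s : 'I_N.+1 -> 'I_N.+1) k : s k = k -> cm s k = k.
Proof.
move=> fk; case: (cmP s k) => c _.
have <- := iter_findex c; elim: (findex _ _ _) => //= n ->; exact: fk.
Qed.

Definition tt N (s : 'I_N.+1 -> 'I_N.+1) k := findex s (cm s k) k.

Lemma tt_lt N (s : 'I_N.+1 -> 'I_N.+1) k : injective s -> (tt s k < N.+1)%N.
Proof.
move=> si; rewrite /tt.
have c : fconnect s (cm s k) k by rewrite fconnect_sym //; case: (cmP s k).
apply: (leq_trans (findex_max c)).
rewrite -size_orbit; have /card_uniqP <- := orbit_uniq s (cm s k).
by rewrite -[X in (_ <= X)%N](card_ord N.+1) max_card.
Qed.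

Lemma tt_step N (s : 'I_N.+1 -> 'I_N.+1) k : injective s -> s k != cm s k ->
  tt s (s k) = (tt s k).+1.
Proof.
move=> si ne; rewrite /tt cm_step //.
set c := cm s k.
have ck : fconnect s c k by rewrite fconnect_sym //; case: (cmP s k).
have := findex_max ck; have := iter_findex ck.
set t := findex s c k => it tl.
have -> : s k = iter t.+1 s c by rewrite iterS it.
rewrite findex_iter //.
rewrite ltn_neqAle tl andbT; apply: contraNneq ne => e.
by apply/eqP; rewrite -/c -{1}it -iterS e iter_order.
Qed.

Definition inK N (s : 'I_N.+1 -> 'I_N.+1) (dd : 'I_N.+1 -> nat) k :=
  (cm s k == k) && ((k == ord_max) || (0 < dd k))%N.

Definition nextK N (s : 'I_N.+1 -> 'I_N.+1) (dd : 'I_N.+1 -> nat) (k : 'I_N.+1) :=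
  [arg min_(x < ord_max | inK s dd x && (k < x)%N) (x : nat)].

Lemma inK_max N (s : 'I_N.+1 -> 'I_N.+1) dd : inK s dd ord_max.
Proof.
rewrite /inK eqxx orTb andbT; apply/eqP/val_inj/eqP.
by rewrite eqn_leq le_cm -ltnS ltn_ord.
Qed.

Lemma nextKP N (s : 'I_N.+1 -> 'I_N.+1) dd (k : 'I_N.+1) : k != ord_max ->
  [/\ inK s dd (nextK s dd k), (k < nextK s dd k)%N &
      forall x, inK s dd x -> (k < x)%N -> (nextK s dd k <= x)%N].
Proof.
move=> km; rewrite /nextK; case: arg_minnP => [|x /andP [h1 h2] h3].
  rewrite inK_max /=; rewrite ltn_neqAle -ltnS ltn_ord andbT.
  by apply: contra km => /eqP e; apply/eqP/val_inj.
by split => // y hy ky; apply: h3; rewrite hy.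
Qed.

Lemma arith B x y a b : (x < y)%N -> (b < B)%N -> (B * x + (B - a) < B * y + (B - b))%N.
Proof.
move=> xy bB; have : (B * x.+1 <= B * y)%N by rewrite leq_mul2l xy orbT.
rewrite mulnS; lia.
Qed.

Definition sig N (j : 'I_N -> 'I_N.+1) (m : 'I_N.+1) (k : 'I_N.+1) : 'I_N.+1 :=
  if unlift ord_max k is Some i then j i else m.

Lemma unlift_w N (i : 'I_N) : unlift ord_max (widen_ord (leq_pred N.+1) i) = Some i.
Proof.
have -> : widen_ord (leq_pred N.+1) i = lift ord_max i.
  by apply: val_inj; rewrite /= /bump leqNgt ltn_ord.
by rewrite liftK.
Qed.

Lemma sig_inj N (j : 'I_N -> 'I_N.+1) m : injective j -> (forall i, j i != m) ->
  injective (sig j m).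
Proof.
move=> hj hm x y; rewrite /sig.
case: (unliftP ord_max x) => [x'|] ->; case: (unliftP ord_max y) => [y'|] -> //.
- by move/hj ->.
- by move=> e; move: (hm x'); rewrite e eqxx.
- by move=> e; move: (hm y'); rewrite e eqxx.
Qed.

Local Open Scope ring_scope.

Theorem theorem4p7 (F : finFieldType) (n : nat) (hn : (2 <= n)%N)
  (j : 'I_n.-1 -> 'I_n) (d : 'I_n.-1 -> nat)
  (hj : injective j)
  (hd : forall i : 'I_n.-1, (j i < i)%N -> (0 < d i)%N) :
  exists M : 'M[{poly F}]_(n.-1, n),
    basic M /\
    forall i : 'I_n.-1,
      [/\ forall k : 'I_n, (k < j i)%N -> (size (M i k) <= (d i).+1)%N,
          size (M i (j i)) = (d i).+1,
          forall k : 'I_n, (j i < k)%N -> (size (M i k) <= d i)%N,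
          (M i (widen_ord (leq_pred n) i)).[0] = 1
        & forall k : 'I_n, (k < i)%N -> (M i k).[0] = 0].
Proof.
case: n hn j d hj hd => [//|N] _ j d hj hd /=.
have [m hm] : exists m : 'I_N.+1, forall i, j i != m.
  case: (pickP (fun m => m \notin codom j)) => [m hm|H].
    by exists m => i; apply: contraNneq hm => <-; rewrite codom_f.
  exfalso.
  have : (#|'I_N.+1| <= #|codom j|)%N.
    apply: subset_leq_card; apply/subsetP => x _; move: (H x) => /= /negbFE; done.
  by rewrite card_codom // !card_ord ltnn.
pose s := sig j m.
have si : injective s := sig_inj hj hm.
pose w (i : 'I_N) := widen_ord (leq_pred N.+1) i.
have sw i : s (w i) = j i by rewrite /s /sig unlift_w.
pose dd k := if unlift ord_max k is Some i then d i else 0%N.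
have ddw i : dd (w i) = d i by rewrite /dd unlift_w.
have wmax i : w i != ord_max by rewrite -val_eqE /= neq_ltn ltn_ord.
pose K := inK s dd. pose nx := nextK s dd.
have Kw i : K (w i) -> [/\ cm s (w i) = w i, (j i <= w i)%N & (0 < d i)%N].
  rewrite /K /inK => /andP [/eqP c /orP [/eqP e|]]; first by move: (wmax i); rewrite e eqxx.
  rewrite ddw => dp; split => //; rewrite -sw -{2}c -(cm_step _ si); exact: le_cm.
pose pi (i : 'I_N) := if K (w i) then nx (w i) else w i.
exists (\matrix_(i, k) ((if k == j i then 'X^(d i) else 0) +
   (if (k == w i) && ((k != j i) || (0 < d i)%N) then 1 else 0) +
   (if K (w i) && (k == nx (w i)) then 1 else 0)) : 'M[{poly F}]_(N, N.+1)).
have s01 (b : bool) : (size (if b then (1 : {poly F})%R else 0%R) <= 1)%N.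
  by case: b; rewrite ?size_poly1 ?size_poly0.
have nxK i : K (w i) -> (w i < nx (w i))%N.
  by move=> _; case: (nextKP s dd (wmax i)).
split.
  have wi (a b : 'I_N) : w a = w b -> a = b.
    by move=> e; apply: val_inj; move: (congr1 val e).
  have pinj : injective pi.
    move=> a b; rewrite /pi.
    case Ka: (K (w a)); case Kb: (K (w b)) => e; last exact: wi.
    - apply: wi; apply/val_inj/eqP; rewrite eqn_leq; apply/andP; split.
      + case: (nextKP s dd (wmax b)) => _ _ mb; case: (nextKP s dd (wmax a)) => _ la _.
        rewrite leqNgt; apply/negP => ba.
        by move: (mb _ Ka ba); rewrite -/nx -e leqNgt -/nx la.
      + case: (nextKP s dd (wmax a)) => _ _ ma; case: (nextKP s dd (wmax b)) => _ lb _.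
        rewrite leqNgt; apply/negP => ab.
        by move: (ma _ Kb ab); rewrite -/nx e leqNgt -/nx lb.
    - by case: (nextKP s dd (wmax a)) => + _ _; rewrite -/nx e -/K Kb.
    - by case: (nextKP s dd (wmax b)) => + _ _; rewrite -/nx -e -/K Ka.
  move=> p hp; have := hp pi; rewrite /maximal_minor.
  set A := colsub pi _.
  suff -> : \det A = 1 by rewrite dvdp1 => /eqP.
  rewrite (@det_pot _ _ A (fun l => N.+1 * cm s (w l) + (N.+1 - tt s (w l)))%N).
    apply: big1 => i _; rewrite /A !mxE /pi.
    case Kwi: (K (w i)).
      case: (Kw i Kwi) => _ h _; have lt := nxK i Kwi.
      have -> : (nx (w i) == j i) = false by rewrite -val_eqE; apply: gtn_eqF; exact: leq_ltn_trans h lt.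
      have -> : (nx (w i) == w i) = false by rewrite -val_eqE gtn_eqF.
      by rewrite eqxx /= !add0r.
    rewrite eqxx /= addr0; case: eqP => [e|/eqP ne]; last by rewrite /= add0r.
    have d0 : d i = 0%N.
      apply/eqP; rewrite -leqn0 leqNgt; apply/negP => dp.
      move: Kwi; rewrite /K /inK cm_fix; last by rewrite sw.
      by rewrite eqxx ddw dp orbT.
    by rewrite d0 /= expr0 !addr0.
  move=> i l nli; rewrite /A !mxE => nz.
  set c := pi l in nz.
  have : (c == j i) || (c == w i) || (K (w i) && (c == nx (w i))).
    apply: contraNT nz; rewrite !negb_or => /andP [/andP [/negbTE a /negbTE b] /negbTE e].
    by rewrite a b e /= !addr0.
  have tB := tt_lt (w i) si.
  case/orP => [/orP [/eqP cj | /eqP cw] | /andP [Ki /eqP cn]].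
  - move: cj; rewrite /c /pi; case Kl: (K (w l)) => cj.
      case: (nextKP s dd (wmax l)); rewrite -/nx cj -sw => Kn ln _.
      case: (Kw l Kl) => cl _ _; rewrite cl.
      move: Kn; rewrite /K /inK => /andP [/eqP cs _].
      rewrite -(cm_step _ si) cs; exact: arith.
    have ne : s (w i) != cm s (w i).
      apply/negP => /eqP e.
      have cl : cm s (w l) = w l by rewrite cj -sw cm_step // e.
      have d0 : d l = 0%N.
        apply/eqP; rewrite -leqn0 leqNgt; apply/negP => dp.
        by move: Kl; rewrite /K /inK cl eqxx ddw dp orbT.
      have jl : j l = w l.
        apply: val_inj; apply/eqP; rewrite eqn_leq; apply/andP; split.
          by rewrite -sw -{2}cl -(cm_step _ si) le_cm.
        rewrite leqNgt; apply/negP => /hd; by rewrite d0.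
      by move: nli; rewrite (wi _ _ (si _ _ (etrans (sw l) (etrans jl (etrans cj (esym (sw i))))))) eqxx.
    rewrite cj -sw cm_step // (tt_step si ne); rewrite ltn_add2l subnS prednK ?ltnSn // subn_gt0; exact: tt_lt.
  - move: cw; rewrite /c /pi; case Kl: (K (w l)) => cw; last first.
      by move: nli; rewrite (wi _ _ cw) eqxx.
    case: (nextKP s dd (wmax l)); rewrite -/nx cw => Kn ln _.
    case: (Kw l Kl) => cl _ _; case: (Kw i Kn) => ci _ _; rewrite cl ci.
    exact: arith.
  - have e : pi l = pi i by rewrite -/c cn /pi Ki.
    by move: nli; rewrite (pinj _ _ e) eqxx.
move=> i; split.
- move=> k hk; rewrite mxE.
  have -> : (k == j i) = false by rewrite -val_eqE ltn_eqF.
  rewrite add0r; apply: leq_trans (size_add _ _) _.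
  by rewrite geq_max !(leq_trans (s01 _)).
- rewrite mxE eqxx /=.
  have -> : K (w i) && (j i == nx (w i)) = false.
    case Kwi: (K (w i)) => //=; case: (Kw i Kwi) => _ h _.
    by rewrite -val_eqE ltn_eqF // (leq_ltn_trans h (nxK i Kwi)).
  rewrite addr0; case: ifP => [/andP [_ dp]|_]; last by rewrite addr0 size_polyXn.
  by rewrite size_addl ?size_polyXn // size_poly1 ltnS.
- move=> k hk; rewrite mxE.
  have -> : (k == j i) = false by rewrite -val_eqE gtn_eqF.
  rewrite add0r; case: (posnP (d i)) => [d0|dp]; last first.
    apply: leq_trans (size_add _ _) _.
    by rewrite geq_max !(leq_trans (s01 _)).
  have -> : (k == w i) = false.
    apply/negbTE; apply: contraTneq hk => ->; rewrite -leqNgt.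
    by case: leqP => // /hd; rewrite d0.
  have -> : K (w i) = false.
    by apply/negbTE; apply/negP => /Kw [_ _]; rewrite d0.
  by rewrite addr0 size_poly0.
- rewrite mxE eqxx /=.
  have -> : K (w i) && (w i == nx (w i)) = false.
    case Kwi: (K (w i)) => //=; by rewrite -val_eqE ltn_eqF // nxK.
  rewrite addr0 hornerD; case: eqP => [e|/eqP ne]; rewrite /= ?ne ?orTb.
    case: (posnP (d i)) => [->|dp]; first by rewrite expr0 hornerC !hornerE.
    by case: (d i) dp => // dk _; rewrite hornerXn expr0n /= !hornerE.
  by rewrite !hornerE.
- move=> k hk; rewrite mxE.
  have -> : (k == w i) = false by rewrite -val_eqE ltn_eqF.
  have -> : K (w i) && (k == nx (w i)) = false.
    case Kwi: (K (w i)) => //=; rewrite -val_eqE ltn_eqF //.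
    exact: ltn_trans hk (nxK i Kwi).
  rewrite andFb addr0 !hornerE; case: eqP => [e|_]; last by rewrite hornerC.
  have dp : (0 < d i)%N by apply: hd; rewrite -e.
  by rewrite hornerXn expr0n gtn_eqF.
Qed.
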